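(* The set $S\setminus\widehat{c}$ is strongly $\mathfrak{c}$-algebrable in the algebra $\ell^\infty$ (with pointwise operations).
   Context: $\ell^\infty$ is the algebra of bounded real sequences with coordinatewise operations. A Banach limit is a linear functional $L\colon\ell^\infty\to\mathbb R$ such that for every $(x_n)\in\ell^\infty$: (1) if $x_n\ge0$ for all $n$ then $L((x_n))\ge0$; (2) $L((x_2,x_3,\dots))=L((x_1,x_2,\dots))$; (3) $L((1,1,\dots))=1$. $\widehat{c}$ is the set of $x\in\ell^\infty$ for which there is $s\in\mathbb R$ with $L(x)=s$ for every Banach limit $L$. $S=\{x\in\ell^\infty\colon\lim_n\frac{x_1+\dots+x_n}{n}\text{ exists}\}$. A subset $A$ of a commutative algebra $\mathcal L$ is strongly $\kappa$-algebrable if $A\cup\{0\}$ contains a $\kappa$-generated subalgebra (minimal number of generators of cardinality $\kappa$) which is isomorphic to a free algebra; equivalently, there is a set $Z\subset\mathcal L$ of cardinality $\kappa$ such that for every $n$, every non-zero polynomial $P$ in $n$ variables without constant term and all distinct $z_1,\dots,z_n\in Z$, $P(z_1,\dots,z_n)\in A\setminus\{0\}$. $\mathfrak c$ is the cardinality of the continuum. *)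

(* Defs.v *)
From Stdlib Require Import Reals.
From HB Require Import structures.
From mathcomp Require Import all_boot all_order all_algebra.
From mathcomp Require Import Rstruct.
From mathcomp Require Import mpoly.

Set Implicit Arguments.
Unset Strict Implicit.
Unset Printing Implicit Defensive.

Local Open Scope R_scope.

Definition bounded (x : nat -> R) : Prop :=
  exists M : R, forall k : nat, Rabs (x k) <= M.

(* A Banach limit: a linear functional on l^infty (its values outside
   l^infty are irrelevant), positive, shift invariant, with L(1,1,...) = 1. *)
Definition banach_limit (L : (nat -> R) -> R) : Prop :=
  (forall x y, bounded x -> bounded y ->
     L (fun k => x k + y k) = L x + L y) /\
  (forall (a : R) x, bounded x -> L (fun k => a * x k) = a * L x) /\
  (forall x, bounded x -> (forall k, 0 <= x k) -> 0 <= L x) /\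
  (forall x, bounded x -> L (fun k => x (S k)) = L x) /\
  L (fun _ => 1) = 1.

Definition c_hat (x : nat -> R) : Prop :=
  bounded x /\ exists s : R, forall L, banach_limit L -> L x = s.

(* S: bounded sequences whose Cesaro means (x_1+...+x_n)/n converge
   (with 0-based indexing: (x 0 + ... + x n)/(n+1)). *)
Definition cesaro_S (x : nat -> R) : Prop :=
  bounded x /\ exists l : R, Un_cv (fun n => sum_f_R0 x n / INR (S n)) l.

Definition peval_seq (n : nat) (P : {mpoly R[n]}) (z : 'I_n -> nat -> R)
  : nat -> R := fun k => P.@[fun i => z i k].

(* A is strongly kappa-algebrable in l^infty, with kappa = |K|: there is a set
   Z of l^infty of cardinality |K| (the image of an injection f : K -> l^infty)
   such that for every n, every non-zero polynomial P in n variables without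
   constant term and all distinct z_1,...,z_n in Z, P(z_1,...,z_n) is in
   A \ {0}. *)
Definition strongly_algebrable (K : Type) (A : (nat -> R) -> Prop) : Prop :=
  exists f : K -> (nat -> R),
    injective f /\ (forall t, bounded (f t)) /\
    forall (n : nat) (P : {mpoly R[n]}) (t : 'I_n -> K),
      injective t -> P != 0%R -> (P@_0%MM = 0)%R ->
      A (peval_seq P (fun i => f (t i))) /\
      peval_seq P (fun i => f (t i)) <> (fun _ => 0).

(* Main.v *)
Require Import Defs.
From Stdlib Require Import Reals Lra Lia List Classical ClassicalEpsilon FunctionalExtensionality.
From mathcomp Require filter classical_sets boolp.
Local Open Scope R_scope.

Definition ultra (U : (nat -> Prop) -> Prop) : Prop :=
  (forall A B : nat -> Prop, (forall i, A i -> B i) -> U A -> U B) /\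
  (forall A B, U A -> U B -> U (fun i => A i /\ B i)) /\
  ~ U (fun _ => False) /\
  (forall A, U A \/ U (fun i => ~ A i)) /\
  (forall N, U (fun i => (N <= i)%nat)).

Lemma ultra_ex : exists U, ultra U.
Proof.
set (F := (fun A : nat -> Prop =>
  exists N, forall i, (N <= i)%nat -> A i) : classical_sets.set_system nat).
assert (FF : filter.ProperFilter F).
  split.
  - intros [N HN]; exact (HN N (le_n N)).
  - split.
    + exists 0%nat; intros; exact I.
    + intros A B [N1 H1] [N2 H2]; exists (max N1 N2); intros i Hi; split;
        [apply H1 | apply H2]; lia.
    + intros A B HAB [N H]; exists N; intros i Hi; apply HAB, H, Hi.
destruct (filter.ultraFilterLemma FF) as [G [GU FG]].
exists G; split; [|split; [|split; [|split]]].
- intros A B HAB HA; exact (@filter.filterS _ G _ A B HAB HA).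
- intros A B HA HB; exact (@filter.filterI _ G _ A B HA HB).
- intros H; exact (@filter.filter_not_empty _ G _ H).
- intros A; exact (filter.in_ultra_setVsetC A GU).
- intros N; apply FG; exists N; auto.
Qed.

Definition unear (U : (nat -> Prop) -> Prop) (y : nat -> R) (l : R) :=
  forall eps, 0 < eps -> U (fun i => Rabs (y i - l) < eps).

Definition ulim U y := epsilon (inhabits 0) (fun l => unear U y l).

Lemma U_mono U A B : ultra U -> (forall i, A i -> B i) -> U A -> U B.
Proof. intros [H _]; apply H. Qed.
Lemma U_and U A B : ultra U -> U A -> U B -> U (fun i => A i /\ B i).
Proof. intros [_ [H _]]; apply H. Qed.
Lemma U_ne U A : ultra U -> U A -> exists i, A i.
Proof.
intros HU HA; apply NNPP; intros Hn; destruct HU as [Hm [_ [H _]]]; apply H.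
apply (Hm A); auto. intros i Ai; apply Hn; exists i; auto.
Qed.
Lemma U_all U (A : nat -> Prop) : ultra U -> (forall i, A i) -> U A.
Proof.
intros HU HA; destruct HU as [Hm [_ [_ [_ Ht]]]]; apply (Hm _ _ (fun i _ => HA i) (Ht 0%nat)).
Qed.
Lemma U_tail U (A : nat -> Prop) N : ultra U -> (forall i, (N <= i)%nat -> A i) -> U A.
Proof.
intros HU HA; destruct HU as [Hm [_ [_ [_ Ht]]]]; apply (Hm _ _ HA (Ht N)).
Qed.
Lemma U_em U A : ultra U -> U A \/ U (fun i => ~ A i).
Proof. intros [_ [_ [_ [H _]]]]; apply H. Qed.

Lemma unear_uniq U y a b : ultra U -> unear U y a -> unear U y b -> a = b.
Proof.
intros HU Ha Hb.
destruct (Req_dec a b) as [|Hne]; auto.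
set (e := Rabs (a - b) / 2).
assert (He : 0 < e) by (unfold e; apply Rdiv_lt_0_compat; [apply Rabs_pos_lt; lra | lra]).
destruct (U_ne U _ HU (U_and U _ _ HU (Ha e He) (Hb e He))) as [i [H1 H2]].
exfalso.
assert (Rabs (a - b) <= Rabs (y i - a) + Rabs (y i - b)).
{ replace (a - b) with (-(y i - a) + (y i - b)) by ring.
  eapply Rle_trans; [apply Rabs_triang|]. rewrite Rabs_Ropp; lra. }
unfold e in *; lra.
Qed.

Lemma ulim_eq U y l : ultra U -> unear U y l -> ulim U y = l.
Proof.
intros HU Hl. unfold ulim.
assert (Hs := @epsilon_spec R (inhabits 0) (fun l => unear U y l) (ex_intro _ l Hl)).
eapply unear_uniq; eauto.
Qed.

Lemma unear_ex U y : ultra U -> Defs.bounded y -> exists l, unear U y l.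
Proof.
intros HU [M HM].
set (E := fun r => U (fun i => r <= y i)).
assert (Hb : bound E).
{ exists M; intros r Er. destruct (Rle_dec r M) as [|Hn]; auto.
  destruct (U_ne U _ HU Er) as [i Hi]. exfalso.
  specialize (HM i). assert (y i <= Rabs (y i)) by apply RRle_abs. lra. }
assert (He : exists r, E r).
{ exists (- M). unfold E. apply U_all; auto. intros i. specialize (HM i).
  assert (- Rabs (y i) <= y i) by (rewrite <- (Rabs_Ropp (y i)); pose proof (RRle_abs (- y i)); lra). lra. }
destruct (completeness E Hb He) as [l [Hub Hlub]].
exists l; intros eps Heps.
assert (H1 : U (fun i => l - eps < y i)).
{ destruct (classic (exists r, E r /\ l - eps < r)) as [[r [Er Hr]]|Hn].
  - apply (U_mono U _ _ HU) with (2 := Er). intros i Hi; lra.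
  - exfalso. assert (l <= l - eps); [|lra].
    apply Hlub. intros r Er. destruct (Rle_dec r (l - eps)); auto.
    exfalso; apply Hn; exists r; split; auto; lra. }
assert (H2 : U (fun i => y i < l + eps)).
{ destruct (U_em U (fun i => y i < l + eps) HU) as [|Hn]; auto.
  exfalso. assert (E (l + eps)).
  { apply (U_mono U _ _ HU) with (2 := Hn). intros i Hi; lra. }
  specialize (Hub _ H); lra. }
apply (U_mono U _ _ HU) with (2 := U_and U _ _ HU H1 H2).
intros i [Ha Hb']. apply Rabs_def1; lra.
Qed.

Lemma ulim_near U y : ultra U -> Defs.bounded y -> unear U y (ulim U y).
Proof.
intros HU Hy. destruct (unear_ex U y HU Hy) as [l Hl].
rewrite (ulim_eq U y l HU Hl); auto.
Qed.

Lemma ulim_plus U u v : ultra U -> Defs.bounded u -> Defs.bounded v ->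
  ulim U (fun i => u i + v i) = ulim U u + ulim U v.
Proof.
intros HU Hu Hv. apply ulim_eq; auto. intros e He.
assert (He2 : 0 < e / 2) by lra.
apply (U_mono U _ _ HU) with (2 := U_and U _ _ HU (ulim_near U u HU Hu _ He2) (ulim_near U v HU Hv _ He2)).
intros i [H1 H2].
replace (u i + v i - (ulim U u + ulim U v)) with ((u i - ulim U u) + (v i - ulim U v)) by ring.
eapply Rle_lt_trans; [apply Rabs_triang|]. lra.
Qed.

Lemma ulim_scal U a u : ultra U -> Defs.bounded u ->
  ulim U (fun i => a * u i) = a * ulim U u.
Proof.
intros HU Hu. apply ulim_eq; auto. intros e He.
assert (He2 : 0 < e / (Rabs a + 1)).
{ apply Rdiv_lt_0_compat; auto. pose proof (Rabs_pos a); lra. }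
apply (U_mono U _ _ HU) with (2 := ulim_near U u HU Hu _ He2).
intros i H.
replace (a * u i - a * ulim U u) with (a * (u i - ulim U u)) by ring.
rewrite Rabs_mult.
apply Rle_lt_trans with ((Rabs a + 1) * Rabs (u i - ulim U u)).
{ apply Rmult_le_compat_r; [apply Rabs_pos| lra]. }
apply Rmult_lt_reg_l with (/ (Rabs a + 1)).
{ apply Rinv_0_lt_compat; pose proof (Rabs_pos a); lra. }
rewrite <- Rmult_assoc, Rinv_l by (pose proof (Rabs_pos a); lra).
rewrite Rmult_1_l. rewrite Rmult_comm. exact H.
Qed.

Lemma ulim_nonneg U u : ultra U -> Defs.bounded u -> (forall i, 0 <= u i) -> 0 <= ulim U u.
Proof.
intros HU Hu Hp. destruct (Rle_dec 0 (ulim U u)) as [|Hn]; auto.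
exfalso. assert (He : 0 < - ulim U u) by lra.
destruct (U_ne U _ HU (ulim_near U u HU Hu _ He)) as [i Hi].
specialize (Hp i). apply Rabs_def2 in Hi. lra.
Qed.

Lemma ulim_null U u : ultra U -> Un_cv u 0 -> ulim U u = 0.
Proof.
intros HU Hc. apply ulim_eq; auto. intros e He.
destruct (Hc e He) as [N HN]. apply (U_tail U _ N HU).
intros i Hi. specialize (HN i Hi). unfold R_dist in HN. exact HN.
Qed.

Lemma ulim_const U c : ultra U -> ulim U (fun _ => c) = c.
Proof.
intros HU. apply ulim_eq; auto. intros e He. apply U_all; auto.
intros; rewrite Rminus_diag, Rabs_R0; auto.
Qed.


Fixpoint ssum (x : nat -> R) (a l : nat) : R :=
  match l with 0%nat => 0 | S l' => ssum x a l' + x (a + l')%nat end.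

Definition LW U (a len : nat -> nat) (x : nat -> R) : R :=
  ulim U (fun i => ssum x (a i) (len i) / INR (len i)).

Lemma ssum_plus x y a l : ssum (fun k => x k + y k) a l = ssum x a l + ssum y a l.
Proof. induction l; simpl; [ring| rewrite IHl; ring]. Qed.
Lemma ssum_scal c x a l : ssum (fun k => c * x k) a l = c * ssum x a l.
Proof. induction l; simpl; [ring| rewrite IHl; ring]. Qed.
Lemma ssum_nonneg x a l : (forall k, 0 <= x k) -> 0 <= ssum x a l.
Proof. intros H; induction l; simpl; [lra| specialize (H (a + l)%nat); lra]. Qed.
Lemma ssum_bound x a l M : (forall k, Rabs (x k) <= M) -> Rabs (ssum x a l) <= INR l * M.
Proof.
intros H; induction l; cbn [ssum].
- rewrite Rabs_R0; simpl; lra.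
- rewrite S_INR. eapply Rle_trans; [apply Rabs_triang|]. specialize (H (a + l)%nat); lra.
Qed.
Lemma ssum_shift x a l : ssum (fun k => x (S k)) a l = ssum x a l + x (a + l)%nat - x a.
Proof.
induction l; simpl.
- rewrite Nat.add_0_r; ring.
- rewrite IHl, Nat.add_succ_r; simpl; ring.
Qed.
Lemma ssum_const v x a l : (forall k, (k < l)%nat -> x (a + k)%nat = v) -> ssum x a l = INR l * v.
Proof.
induction l; intros H; cbn [ssum]; [simpl; ring|]. rewrite IHl by (intros; apply H; lia).
rewrite H by lia. rewrite S_INR; ring.
Qed.

Lemma avg_bounded x (a len : nat -> nat) : (forall i, (0 < len i)%nat) -> Defs.bounded x ->
  Defs.bounded (fun i => ssum x (a i) (len i) / INR (len i)).
Proof.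
intros Hl [M HM]. exists M. intros i.
assert (Hp : 0 < INR (len i)) by (apply lt_0_INR; auto).
unfold Rdiv; rewrite Rabs_mult, Rabs_inv, (Rabs_right (INR (len i))) by lra.
apply Rmult_le_reg_r with (INR (len i)); auto.
rewrite Rmult_assoc, Rinv_l, Rmult_1_r by lra.
rewrite Rmult_comm. apply ssum_bound; auto.
Qed.

Lemma cv0_harm u C : 0 <= C -> (forall i, Rabs (u i) <= C / INR (S i)) -> Un_cv u 0.
Proof.
intros HC Hu eps He.
assert (He' : 0 < eps / (C + 1)) by (apply Rdiv_lt_0_compat; lra).
destruct (archimed_cor1 _ He') as [N [HN HN0]].
exists N. intros i Hi. unfold R_dist. rewrite Rminus_0_r.
eapply Rle_lt_trans; [apply Hu|].
assert (H1 : INR N <= INR (S i)) by (apply le_INR; lia).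
assert (H0 : 0 < INR N) by (apply lt_0_INR; auto).
assert (C / INR (S i) <= C / INR N).
{ unfold Rdiv; apply Rmult_le_compat_l; auto. apply Rinv_le_contravar; auto. }
assert (C / INR N <= C * (eps / (C + 1))).
{ unfold Rdiv at 1; apply Rmult_le_compat_l; auto. lra. }
assert (C * (eps / (C + 1)) < eps).
{ apply Rmult_lt_reg_r with (C + 1); [lra|]. unfold Rdiv.
  rewrite Rmult_assoc, Rmult_assoc, Rinv_l by lra. nra. }
lra.
Qed.

Lemma LW_banach U a len : ultra U -> (forall i, (i < len i)%nat) -> banach_limit (LW U a len).
Proof.
intros HU Hl.
assert (Hl0 : forall i, (0 < len i)%nat) by (intros i; specialize (Hl i); lia).
unfold LW; split; [|split; [|split; [|split]]].
- intros x y Hx Hy.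
  rewrite <- ulim_plus by (auto; apply avg_bounded; auto).
  f_equal; apply functional_extensionality; intros i.
  rewrite ssum_plus; unfold Rdiv; ring.
- intros c x Hx.
  rewrite <- ulim_scal by (auto; apply avg_bounded; auto).
  f_equal; apply functional_extensionality; intros i.
  rewrite ssum_scal; unfold Rdiv; ring.
- intros x Hx Hp. apply ulim_nonneg; auto. apply avg_bounded; auto.
  intros i. unfold Rdiv; apply Rmult_le_pos; [apply ssum_nonneg; auto| left; apply Rinv_0_lt_compat, lt_0_INR; auto].
- intros x Hx.
  assert (E : (fun i => ssum (fun k => x (S k)) (a i) (len i) / INR (len i)) =
     (fun i => ssum x (a i) (len i) / INR (len i) + (x (a i + len i)%nat - x (a i)) / INR (len i))).
  { apply functional_extensionality; intros i. rewrite ssum_shift. unfold Rdiv; ring. }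
  rewrite E. destruct Hx as [M HM].
  rewrite ulim_plus; auto.
  + rewrite (ulim_null U (fun i => (x (a i + len i)%nat - x (a i)) / INR (len i))); auto. ring.
    apply cv0_harm with (2 * M).
    { specialize (HM 0%nat). pose proof (Rabs_pos (x 0%nat)); lra. }
    intros i. assert (Hp : 0 < INR (len i)) by (apply lt_0_INR; auto).
    assert (INR (S i) <= INR (len i)) by (apply le_INR; apply Hl).
    assert (HS : 0 < INR (S i)) by (apply lt_0_INR; lia).
    unfold Rdiv. rewrite Rabs_mult, Rabs_inv, (Rabs_right (INR (len i))) by lra.
    assert (Rabs (x (a i + len i)%nat - x (a i)) <= 2 * M).
    { unfold Rminus; eapply Rle_trans; [apply Rabs_triang|]. rewrite Rabs_Ropp.
      pose proof (HM (a i + len i)%nat); pose proof (HM (a i)); lra. }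
    apply Rle_trans with (2 * M * / INR (len i)).
    { apply Rmult_le_compat_r; auto. left; apply Rinv_0_lt_compat; auto. }
    apply Rmult_le_compat_l; [pose proof (Rabs_pos (x (a i))); pose proof (HM (a i)); lra|].
    apply Rinv_le_contravar; auto.
  + apply avg_bounded; auto. exists M; auto.
  + exists (2 * M). intros i. assert (Hp : 1 <= INR (len i)).
    { replace 1 with (INR 1) by reflexivity. apply le_INR. apply Hl0. }
    unfold Rdiv. rewrite Rabs_mult, Rabs_inv, (Rabs_right (INR (len i))) by lra.
    assert (Rabs (x (a i + len i)%nat - x (a i)) <= 2 * M).
    { unfold Rminus; eapply Rle_trans; [apply Rabs_triang|]. rewrite Rabs_Ropp.
      pose proof (HM (a i + len i)%nat); pose proof (HM (a i)); lra. }
    apply Rle_trans with (2 * M * 1); [|lra].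
    apply Rmult_le_compat; auto using Rabs_pos.
    left; apply Rinv_0_lt_compat; lra.
    rewrite <- Rinv_1; apply Rinv_le_contravar; lra.
- transitivity (ulim U (fun _ => 1)); [|apply ulim_const; auto]. f_equal; apply functional_extensionality; intros i.
  rewrite (ssum_const 1 (fun _ => 1)) by (intros; reflexivity).
  field. apply not_0_INR. specialize (Hl0 i); lia.
Qed.

Lemma LW_value U a len x v : ultra U -> (forall i, (0 < len i)%nat) ->
  (forall i k, (k < len i)%nat -> x (a i + k)%nat = v) -> LW U a len x = v.
Proof.
intros HU Hl Hx. unfold LW. rewrite <- (ulim_const U v HU).
f_equal; apply functional_extensionality; intros i.
rewrite (ssum_const v) by (intros; apply Hx; auto). field. apply not_0_INR. specialize (Hl i); lia.
Qed.


Definition Qf (k : nat) : nat := Nat.sqrt k.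
Definition rf (k : nat) : nat := (k - Qf k * Qf k)%nat.
Definition sf (k : nat) : nat := Nat.sqrt (Qf k).
Definition inA (k : nat) : bool := Nat.ltb (rf k) (sf k).
Definition jdx (k : nat) : nat := (Qf k - sf k * sf k)%nat.

Fixpoint cnt (n : nat) : nat :=
  match n with
  | 0%nat => if inA 0 then 1%nat else 0%nat
  | S m => (cnt m + if inA (S m) then 1 else 0)%nat
  end.

Lemma sqrt_facts a : (Nat.sqrt a * Nat.sqrt a <= a < S (Nat.sqrt a) * S (Nat.sqrt a))%nat.
Proof. apply Nat.sqrt_spec; lia. Qed.

Lemma cnt_inv n : (cnt n <= Qf n * sf n + Nat.min (rf n + 1) (sf n))%nat.
Proof.
induction n.
- unfold cnt, inA, rf, sf, Qf. simpl. lia.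
- cbn [cnt]. unfold inA, rf, sf, Qf in *.
  set (Q := Nat.sqrt n) in *. set (Q' := Nat.sqrt (S n)).
  pose proof (sqrt_facts n) as Hn. fold Q in Hn.
  pose proof (sqrt_facts (S n)) as Hn'. fold Q' in Hn'.
  assert (HQ : (Q <= Q')%nat) by (apply Nat.sqrt_le_mono; lia).
  assert (HQ' : (Q' <= S Q)%nat).
  { destruct (Nat.le_gt_cases Q' (S Q)) as [|Hc]; auto.
    exfalso. assert (S (S Q) * S (S Q) <= Q' * Q')%nat by (apply Nat.mul_le_mono; lia). lia. }
  destruct (Nat.eq_dec Q' Q) as [E|E].
  + rewrite E. set (s := Nat.sqrt Q) in *.
    destruct (Nat.ltb_spec (S n - Q * Q) s); lia.
  + assert (E2 : Q' = S Q) by lia. rewrite E2.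
    assert (Hs : (Nat.sqrt Q <= Nat.sqrt (S Q))%nat) by (apply Nat.sqrt_le_mono; lia).
    assert (Hs1 : (1 <= Nat.sqrt (S Q))%nat).
    { replace 1%nat with (Nat.sqrt 1) by reflexivity. apply Nat.sqrt_le_mono; lia. }
    rewrite E2 in Hn'.
    assert (S n = S Q * S Q)%nat by lia.
    destruct (Nat.ltb_spec (S n - S Q * S Q) (Nat.sqrt (S Q))); nia.
Qed.

Lemma cnt_bound n K : (K <= sf n)%nat -> (cnt n * K <= 2 * S n)%nat.
Proof.
intros HK. pose proof (cnt_inv n).
unfold sf, rf, Qf in *.
pose proof (sqrt_facts n). pose proof (sqrt_facts (Nat.sqrt n)).
set (Q := Nat.sqrt n) in *. set (s := Nat.sqrt Q) in *.
assert (cnt n <= (Q + 1) * s)%nat by lia.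
assert (cnt n * K <= (Q + 1) * s * s)%nat by nia.
nia.
Qed.

Lemma sf_large K n : (K * K * (K * K) <= n)%nat -> (K <= sf n)%nat.
Proof.
intros H. unfold sf, Qf.
rewrite <- (Nat.sqrt_square K) at 1. apply Nat.sqrt_le_mono.
rewrite <- (Nat.sqrt_square (K * K)). apply Nat.sqrt_le_mono. auto.
Qed.

Lemma win_A j i t : (t < j + i + 1)%nat ->
  let q := ((j + i + 1) * (j + i + 1) + j)%nat in
  inA (q * q + t) = true /\ jdx (q * q + t) = j.
Proof.
intros Ht q.
assert (HQ : Qf (q * q + t) = q).
{ unfold Qf; apply Nat.sqrt_unique; unfold q in *; nia. }
assert (Hs : sf (q * q + t) = (j + i + 1)%nat).
{ unfold sf; rewrite HQ; apply Nat.sqrt_unique; unfold q; nia. }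
unfold inA, jdx, rf. rewrite HQ, Hs. split.
- apply Nat.ltb_lt. lia.
- unfold q; lia.
Qed.

Lemma win_notA i t : (t < i + 1)%nat ->
  let q := ((i + 1) * (i + 1))%nat in
  inA (q * q + (i + 1) + t) = false.
Proof.
intros Ht q.
assert (HQ : Qf (q * q + (i + 1) + t) = q).
{ unfold Qf; apply Nat.sqrt_unique; unfold q in *; nia. }
assert (Hs : sf (q * q + (i + 1) + t) = (i + 1)%nat).
{ unfold sf; rewrite HQ; apply Nat.sqrt_unique; unfold q; nia. }
unfold inA, rf. rewrite HQ, Hs. apply Nat.ltb_ge. lia.
Qed.


Lemma cesaro_sum x c0 B : (forall k, inA k = false -> x k = c0) ->
  (forall k, Rabs (x k - c0) <= B) ->
  forall n, Rabs (sum_f_R0 x n - INR (S n) * c0) <= B * INR (cnt n).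
Proof.
intros H0 HB n. induction n.
- cbn [sum_f_R0 cnt]. replace (INR 1) with 1 by reflexivity.
  destruct (inA 0) eqn:E.
  + replace (INR 1) with 1 by reflexivity. rewrite Rmult_1_l, Rmult_1_r. apply HB.
  + rewrite H0 by auto. replace (c0 - 1 * c0) with 0 by ring. rewrite Rabs_R0.
    simpl. lra.
- cbn [sum_f_R0 cnt]. rewrite plus_INR, S_INR.
  replace (sum_f_R0 x n + x (S n) - (INR (S n) + 1) * c0) with
    ((sum_f_R0 x n - INR (S n) * c0) + (x (S n) - c0)) by ring.
  eapply Rle_trans; [apply Rabs_triang|].
  destruct (inA (S n)) eqn:E.
  + replace (INR 1) with 1 by reflexivity. specialize (HB (S n)). lra.
  + rewrite H0 by auto. replace (c0 - c0) with 0 by ring. rewrite Rabs_R0.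
    replace (INR 0) with 0 by reflexivity. lra.
Qed.

Lemma cesaro_main x c0 B : (forall k, inA k = false -> x k = c0) ->
  (forall k, Rabs (x k - c0) <= B) ->
  Un_cv (fun n => sum_f_R0 x n / INR (S n)) c0.
Proof.
intros H0 HB eps He.
assert (HB0 : 0 <= B) by (pose proof (HB 0%nat); pose proof (Rabs_pos (x 0%nat - c0)); lra).
assert (He' : 0 < eps / (2 * B + 1)) by (apply Rdiv_lt_0_compat; lra).
destruct (archimed_cor1 _ He') as [K [HK HK0]].
exists (K * K * (K * K))%nat. intros n Hn. unfold R_dist.
assert (Hc := cnt_bound n K (sf_large K n Hn)).
apply le_INR in Hc. rewrite mult_INR, mult_INR in Hc.
assert (HSn : 0 < INR (S n)) by (apply lt_0_INR; lia).
assert (HK' : 0 < INR K) by (apply lt_0_INR; auto).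
replace (sum_f_R0 x n / INR (S n) - c0) with ((sum_f_R0 x n - INR (S n) * c0) / INR (S n))
  by (field; lra).
unfold Rdiv; rewrite Rabs_mult, Rabs_inv, (Rabs_right (INR (S n))) by lra.
pose proof (cesaro_sum x c0 B H0 HB n) as Hs.
apply Rle_lt_trans with (B * INR (cnt n) * / INR (S n)).
{ apply Rmult_le_compat_r; auto. left; apply Rinv_0_lt_compat; auto. }
assert (INR (cnt n) <= 2 * INR (S n) / INR K).
{ apply Rmult_le_reg_r with (INR K); auto. unfold Rdiv. rewrite Rmult_assoc, Rinv_l by lra.
  replace (INR 2) with 2 in Hc by reflexivity. lra. }
apply Rle_lt_trans with (2 * B / INR K).
{ apply Rmult_le_reg_r with (INR (S n)); auto. rewrite Rmult_assoc, Rinv_l by lra.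
  rewrite Rmult_1_r. apply Rle_trans with (B * (2 * INR (S n) / INR K)).
  - apply Rmult_le_compat_l; auto.
  - unfold Rdiv; nra. }
assert (2 * B / INR K <= 2 * B * (eps / (2 * B + 1))).
{ unfold Rdiv at 1. apply Rmult_le_compat_l; lra. }
assert (2 * B * (eps / (2 * B + 1)) < eps).
{ apply Rmult_lt_reg_r with (2 * B + 1); [lra|].
  replace (2 * B * (eps / (2 * B + 1)) * (2 * B + 1)) with (2 * B * eps) by (field; lra). nra. }
lra.
Qed.

Lemma not_chat x U (a1 l1 a2 l2 : nat -> nat) v1 v2 : ultra U ->
  (forall i, (i < l1 i)%nat) -> (forall i, (i < l2 i)%nat) ->
  (forall i k, (k < l1 i)%nat -> x (a1 i + k)%nat = v1) ->
  (forall i k, (k < l2 i)%nat -> x (a2 i + k)%nat = v2) ->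
  v1 <> v2 -> ~ c_hat x.
Proof.
intros HU H1 H2 Hx1 Hx2 Hne [_ [s Hs]].
assert (E1 := Hs _ (LW_banach U a1 l1 HU H1)).
assert (E2 := Hs _ (LW_banach U a2 l2 HU H2)).
rewrite LW_value with (v := v1) in E1; auto; [|intros i; specialize (H1 i); lia].
rewrite LW_value with (v := v2) in E2; auto; [|intros i; specialize (H2 i); lia].
congruence.
Qed.


Definition dd (k : nat) : R := / INR (k + 2).

Lemma dd_range k : 0 <= dd k <= 1.
Proof.
unfold dd. assert (H : 1 <= INR (k + 2)).
{ replace 1 with (INR 1) by reflexivity. apply le_INR; lia. }
split.
- left; apply Rinv_0_lt_compat; lra.
- rewrite <- Rinv_1. apply Rinv_le_contravar; lra.
Qed.

Fixpoint evc (l : list (nat * nat * nat * nat)) (t : R) : R :=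
  match l with
  | nil => 0
  | cons (m, zp, zn, k) l' =>
      if Z.eq_dec (up (t * 2 ^ m)) (Z.of_nat zp - Z.of_nat zn)%Z then dd k else evc l' t
  end.

Lemma evc_range l t : 0 <= evc l t <= 1.
Proof.
induction l as [|[[[m zp] zn] k] l IH]; simpl; [lra|].
destruct Z.eq_dec; auto using dd_range.
Qed.

Lemma up_close x y : up x = up y -> Rabs (x - y) < 1.
Proof.
intros H. destruct (archimed x) as [H1 H2]. destruct (archimed y) as [H3 H4].
rewrite H in H1, H2. apply Rabs_def1; lra.
Qed.

Lemma pow2_ge n : INR n <= 2 ^ n.
Proof.
induction n; [simpl; lra|]. rewrite S_INR. cbn [pow].
assert (1 <= 2 ^ n) by (apply pow_R1_Rle; lra). lra.
Qed.

Lemma sep1 s t : s <> t -> exists m, forall m', (m <= m')%nat -> up (s * 2 ^ m') <> up (t * 2 ^ m').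
Proof.
intros Hne. assert (Hd : 0 < Rabs (s - t)) by (apply Rabs_pos_lt; lra).
assert (Hd' : 0 < / Rabs (s - t)) by (apply Rinv_0_lt_compat; auto).
destruct (archimed_cor1 _ Hd) as [m [Hm Hm0]].
exists m. intros m' Hm' E. apply up_close in E.
replace (s * 2 ^ m' - t * 2 ^ m') with ((s - t) * 2 ^ m') in E by ring.
rewrite Rabs_mult, (Rabs_right (2 ^ m')) in E by (left; apply pow_lt; lra).
assert (INR m <= 2 ^ m') by (eapply Rle_trans; [apply le_INR; exact Hm'| apply pow2_ge]).
assert (H0 : 0 < INR m) by (apply lt_0_INR; auto).
assert (1 < Rabs (s - t) * INR m).
{ apply Rmult_lt_reg_r with (/ INR m); [apply Rinv_0_lt_compat; auto|].
  rewrite Rmult_assoc, Rinv_r, Rmult_1_l, Rmult_1_r by lra. lra. }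
nra.
Qed.

Lemma sep_list (ss : list R) t : exists m, forall s, In s ss -> s <> t -> up (s * 2 ^ m) <> up (t * 2 ^ m).
Proof.
induction ss as [|s ss [m IH]].
- exists 0%nat; intros s [].
- destruct (Req_dec s t) as [E|E].
  + exists m. intros s' [<-|Hin] Hne; [congruence| auto].
  + destruct (sep1 s t E) as [m1 H1].
    assert (IH' : exists m2, forall m', (m2 <= m')%nat -> forall s', In s' ss -> s' <> t -> up (s' * 2 ^ m') <> up (t * 2 ^ m')).
    { clear IH. induction ss as [|s2 ss IH2].
      - exists 0%nat; intros m' _ s' [].
      - destruct IH2 as [m2 H2].
        destruct (Req_dec s2 t) as [E2|E2].
        + exists m2. intros m' Hm' s' [<-|Hin] Hne; [congruence|]. apply (H2 m'); auto.
        + destruct (sep1 s2 t E2) as [m3 H3]. exists (max m2 m3).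
          intros m' Hm' s' [<-|Hin] Hne.
          * apply H3; lia.
          * apply (H2 m'); auto; lia. }
    destruct IH' as [m2 H2]. exists (max m1 m2).
    intros s' [<-|Hin] Hne.
    * apply H1; lia.
    * apply (H2 (max m1 m2)); auto; lia.
Qed.

Lemma encode (l : list (R * nat)) :
  (forall p q, In p l -> In q l -> fst p = fst q -> snd p = snd q) ->
  exists code, forall p, In p l -> evc code (fst p) = dd (snd p).
Proof.
induction l as [|[t k] l IH]; intros Hl.
- exists nil; intros p [].
- destruct IH as [code Hc].
  { intros p q Hp Hq; apply Hl; right; auto. }
  destruct (sep_list (map fst l) t) as [m Hm].
  set (z := up (t * 2 ^ m)).
  exists (cons (m, Z.to_nat z, Z.to_nat (- z), k) code).
  intros [s k'] Hin. simpl fst; simpl snd. cbn [evc].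
  assert (Ez : (Z.of_nat (Z.to_nat z) - Z.of_nat (Z.to_nat (- z)))%Z = z) by lia.
  rewrite Ez.
  destruct Hin as [E|Hin].
  + inversion E; subst. destruct Z.eq_dec as [_|C]; [reflexivity| exfalso; apply C; reflexivity].
  + destruct (Req_dec s t) as [Est|Est].
    * subst s. destruct Z.eq_dec as [_|C]; [|exfalso; apply C; reflexivity].
      f_equal. symmetry. apply (Hl (t, k') (t, k)); simpl; auto.
    * destruct Z.eq_dec as [C|_].
      -- exfalso. apply (Hm s); auto. change s with (fst (s, k')). apply in_map; auto.
      -- apply (Hc (s, k')); auto.
Qed.

From HB Require Import structures.
From mathcomp Require Import all_boot all_order all_algebra.
From mathcomp Require Import Rstruct mpoly zify.
Import Order.TTheory GRing.Theory Num.Theory.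
Local Open Scope ring_scope.
Local Notation widen := (widen_ord (leqnSn _)).

Lemma muniX n (m : 'X_{1..n.+1}) :
  muni ('X_[m] : {mpoly R[n.+1]}) = 'X_[[multinom m (widen i) | i < n]] *: 'X^(m ord_max).
Proof. by rewrite muniE msuppX big_seq1 mcoeffX eqxx scale1r. Qed.

Lemma meval_muni n (P : {mpoly R[n.+1]}) (v : 'I_n.+1 -> R) :
  P.@[v] = (map_poly (meval (fun i => v (widen i))) (muni P)).[v ord_max].
Proof.
elim/mpolyind: P => [|c m p _ _ IH].
  by rewrite meval0 muni0 map_poly0 horner0.
rewrite mevalD mevalZ mevalX muniD muniZ muniX !raddfD /= hornerD -IH; congr (_ + _).
rewrite !map_polyZ /= mevalC map_polyXn hornerZ hornerZ hornerXn mevalX.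
rewrite big_ord_recr /=; congr (_ * (_ * _)).
by apply: eq_bigr => i _; rewrite mnmE.
Qed.

Lemma mcoeff_muni n (P : {mpoly R[n.+1]}) (m : 'X_{1..n.+1}) :
  P@_m = ((muni P)`_(m ord_max))@_[multinom m (widen i) | i < n].
Proof.
elim/mpolyind: P => [|c m0 p _ _ IH].
  by rewrite muni0 coef0 !mcoeff0.
rewrite mcoeffD IH muniD coefD mcoeffD; congr (_ + _).
rewrite muniZ muniX coefZ coefZ coefXn mcoeffZ mcoeffX.
rewrite mcoeffCM mulr_natr mcoeffMn mcoeffX.
congr (_ * _).
have -> : (m0 == m) = ([multinom m0 (widen i) | i < n] == [multinom m (widen i) | i < n])
   && (m ord_max == m0 ord_max).
  apply/eqP/andP => [->|[/eqP E1 /eqP E2]]; first by split.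
  apply/mnmP => i; case: (unliftP ord_max i) => [j ->|->] //.
  have := congr1 (fun mm : 'X_{1..n} => mm j) E1; rewrite !mnmE.
  by have -> : lift ord_max j = widen j by apply: val_inj; rewrite /= /bump leqNgt ltn_ord.
by case: eqP; case: eqP; rewrite /= ?mulr1 ?mulr0 ?mul1r ?mul0r.
Qed.


Lemma dd_inj : injective dd.
Proof.
move=> a b; rewrite /dd => H.
have H2 : INR (a + 2) = INR (b + 2).
  exact: Rinv_eq_reg.
by move/INR_eq/eqP: H2; rewrite eqn_add2r => /eqP.
Qed.

Lemma poly_nonroot (r : {poly R}) : r != 0 -> exists y : nat, r.[dd y] != 0.
Proof.
move=> rn0; case: (classic (exists y : nat, r.[dd y] != 0)) => // H; exfalso.
have Hy y : root r (dd y).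
  by apply/negPn/negP => Hn; apply: H; exists y.
have H1 : all (root r) (map dd (iota 0 (size r))).
  by apply/allP => x /mapP [y _ ->].
have H2 : uniq (map dd (iota 0 (size r))).
  by rewrite map_inj_uniq ?iota_uniq //; exact: dd_inj.
by have := max_poly_roots rn0 H1 H2; rewrite size_map size_iota ltnn.
Qed.

Lemma lift_max_widen n (j : 'I_n) : lift ord_max j = widen j.
Proof. by apply: val_inj; rewrite /= /bump leqNgt ltn_ord. Qed.

Lemma grid n (P : {mpoly R[n]}) : P != 0 -> exists g : 'I_n -> nat, P.@[fun i => dd (g i)] != 0.
Proof.
elim: n P => [|n IH] P HP.
  exists (fun _ => 0%N).
  have EP : P = (P@_0%MM)%:MP.
    apply/mpolyP => m; rewrite mcoeffC.
    have -> : m = 0%MM by apply/mnmP => -[].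
    by rewrite eqxx mulr1.
  by move: HP; rewrite EP mpolyC_eq0 mevalC.
have [m Hm] : exists m, P@_m != 0.
  case: (classic (exists m, P@_m != 0)) => // H; exfalso.
  move/eqP: HP; apply; apply/mpolyP => m; rewrite mcoeff0.
  by apply/eqP/negPn/negP => Hn; apply: H; exists m.
set q := muni P.
have Hq : (q`_(m ord_max)) != 0.
  by apply: contraNneq Hm => E; rewrite mcoeff_muni -/q E mcoeff0.
have [g' Hg'] := IH _ Hq.
set r := map_poly (meval (fun i => dd (g' i))) q.
have Hr : r != 0.
  by apply: contraNneq Hg' => E; rewrite -coef_map -/r E coef0.
have [y Hy] := poly_nonroot _ Hr.
exists (fun i => if unlift ord_max i is Some j then g' j else y).
rewrite meval_muni /= unlift_none.
have -> : (fun i : 'I_n => dd (if unlift ord_max (widen i) is Some j then g' j else y))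
   = (fun i => dd (g' i)).
  by apply: functional_extensionality => i; rewrite -lift_max_widen liftK.
exact: Hy.
Qed.


Lemma poly_bound n (P : {mpoly R[n]}) :
  exists B : R, forall v : 'I_n -> R, (forall i, 0 <= v i <= 1) -> `|P.@[v]| <= B.
Proof.
elim/mpolyind: P => [|c m p _ _ [B HB]].
  by exists 0 => v _; rewrite meval0 normr0.
exists (`|c| + B) => v Hv.
rewrite mevalD mevalZ mevalX; apply: le_trans (ler_normD _ _) _.
apply: lerD (HB v Hv).
rewrite normrM; apply: ler_piMr => //.
have H0 : 0 <= \prod_(i < n) v i ^+ m i by apply: prodr_ge0 => i _; rewrite exprn_ge0 //; case/andP: (Hv i).
rewrite ger0_norm //; apply: prodr_ile1 => i _; case/andP: (Hv i) => H1 H2.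
by rewrite exprn_ge0 //= exprn_ile1.
Qed.

Lemma mem_In (T : eqType) (x : T) (s : seq T) : x \in s -> List.In x s.
Proof.
elim: s => //= y s IH; rewrite in_cons => /orP [/eqP ->|/IH]; [left|right]; done.
Qed.

Definition code_t := (nat * nat * nat * nat)%type.

Definition cf (j : nat) (t : R) : R :=
  match @unpickle (seq code_t) j with Some l => evc l t | None => 0 end.

Lemma cf_range j t : Rle 0 (cf j t) /\ Rle (cf j t) 1.
Proof.
rewrite /cf; case: (unpickle j) => [l|]; first exact: evc_range.
split; [apply: Rle_refl | apply: Rle_0_1].
Qed.

Lemma cf_encode_list (l : list (R * nat)) :
  (forall p q, List.In p l -> List.In q l -> fst p = fst q -> snd p = snd q) ->
  exists j, forall p, List.In p l -> cf j (fst p) = dd (snd p).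
Proof.
move=> Hl; have [code Hc] := encode l Hl.
exists (pickle (code : seq code_t)) => p Hp; rewrite /cf pickleK; exact: Hc.
Qed.

Lemma cf_encode n (t : 'I_n -> R) (g : 'I_n -> nat) :
  injective t -> exists j, forall i, cf j (t i) = dd (g i).
Proof.
move=> Ht.
set l := List.map (fun i => (t i, g i)) (enum 'I_n).
have Hl : forall p q, List.In p l -> List.In q l -> fst p = fst q -> snd p = snd q.
  move=> p q /List.in_map_iff [i [<- _]] /List.in_map_iff [i' [<- _]] /= E.
  by rewrite (Ht _ _ E).
have [j Hj] := cf_encode_list l Hl.
exists j => i; apply: (Hj (t i, g i)).
apply: (List.in_map (fun i => (t i, g i))); apply: mem_In; by rewrite mem_enum.
Qed.

Definition fseq (t : R) (k : nat) : R := if inA k then cf (jdx k) t else 0.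

Lemma fseq_range t k : Rle 0 (fseq t k) /\ Rle (fseq t k) 1.
Proof.
rewrite /fseq; case: (inA k); first exact: cf_range.
split; [apply: Rle_refl | apply: Rle_0_1].
Qed.

Theorem theorem3p4 :
  strongly_algebrable R (fun x => cesaro_S x /\ ~ c_hat x).
Proof.
have [U HU] := ultra_ex.
exists fseq; split; [|split].
- move=> t t' E; apply: NNPP => Hne.
  have Hl : forall p q, List.In p [:: (t, 0%N); (t', 1%N)] -> List.In q [:: (t, 0%N); (t', 1%N)] ->
      fst p = fst q -> snd p = snd q.
    move=> p q /= [<-|[<-|[]]] [<-|[<-|[]]] //= E'; exfalso; apply: Hne; done.
  have [j Hj] := cf_encode_list _ Hl.
  have [HA HJ] := win_A j 0 0 ltac:(lia).
  set k := (((j + 0 + 1) * (j + 0 + 1) + j) * ((j + 0 + 1) * (j + 0 + 1) + j) + 0)%coq_nat in HA HJ.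
  have := congr1 (fun f => f k) E; rewrite /fseq HA HJ.
  rewrite (Hj (t, 0%N)) /=; last by left.
  rewrite (Hj (t', 1%N)) /=; last by right; left.
  by move/dd_inj.
- move=> t; exists 1 => k; have [H1 H2] := fseq_range t k.
  rewrite Rabs_right //; exact: Rle_ge.
- move=> n P t Ht HP HP0.
  set x := peval_seq P (fun i => fseq (t i)).
  set c0 := P.@[fun _ => 0].
  have Hoff : forall k, inA k = false -> x k = c0.
    by move=> k Hk; rewrite /x /peval_seq /fseq Hk.
  have HQ : P - c0%:MP != 0.
    apply: contraNneq HP => E.
    have EP : P = c0%:MP by apply/eqP; rewrite -subr_eq0 E.
    rewrite EP mcoeffC eqxx mulr1 in HP0.
    by rewrite EP HP0 mpolyC0.
  have [g Hg] := grid _ _ HQ.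
  rewrite mevalB mevalC in Hg.
  set v1 := P.@[fun i => dd (g i)] in Hg.
  have Hv : v1 <> c0 by move=> E; move: Hg; rewrite E subrr eqxx.
  have [j Hj] := cf_encode _ t g Ht.
  have Hw1 : forall i k, (k < j + i + 1)%coq_nat ->
      x (((j + i + 1) * (j + i + 1) + j) * ((j + i + 1) * (j + i + 1) + j) + k)%coq_nat = v1.
    move=> i k Hk; have [HA HJ] := win_A j i k Hk.
    rewrite /x /peval_seq /fseq HA HJ; apply: meval_eq => m; exact: Hj.
  have Hw2 : forall i k, (k < i + 1)%coq_nat ->
      x (((i + 1) * (i + 1)) * ((i + 1) * (i + 1)) + (i + 1) + k)%coq_nat = c0.
    move=> i k Hk; apply: Hoff; exact: win_notA.
  have [B HB] := poly_bound _ P.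
  have HBx : forall k, Rle (Rabs (x k)) B.
    move=> k; apply/RleP; apply: HB => i; have [H1 H2] := fseq_range (t i) k.
    by apply/andP; split; apply/RleP.
  have HBc : Rle (Rabs c0) B.
    apply/RleP; apply: HB => i; by rewrite lexx ler01.
  split; [split|].
  + split; first by exists B.
    exists c0; apply: (cesaro_main x c0 (2 * B)) => // k.
    apply: Rle_trans (Rabs_triang _ _) _; rewrite Rabs_Ropp.
    have := HBx k; lra.
  + apply: (not_chat x U
       (fun i => ((j + i + 1) * (j + i + 1) + j) * ((j + i + 1) * (j + i + 1) + j))%coq_nat
       (fun i => j + i + 1)%coq_nat
       (fun i => ((i + 1) * (i + 1)) * ((i + 1) * (i + 1)) + (i + 1))%coq_nat
       (fun i => i + 1)%coq_nat v1 c0 HU) => //.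
    * move=> i; lia.
    * move=> i; lia.
  + move=> E.
    have E1 := Hw1 0%N 0%N ltac:(lia).
    have E2 := Hw2 0%N 0%N ltac:(lia).
    rewrite E in E1 E2; apply: Hv; by rewrite -E1 -E2.
Qed.
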